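(* Let $A\in\mathcal{PM}(n)$ be the poset matrix of an NL poset $P$ on $X_n$, let $T$ be the set of order ideals of $P$, let $S\in T$, and let $v\in\{0,1\}^n$ be the characteristic vector of $S$. Then $$\mathrm{Grow}_S(T)=\mathcal I(P_{A^v}),$$ the set of order ideals of the NL poset on $X_{n+1}$ whose poset matrix is $A^v=\begin{bmatrix}A&\mathbf 0\\ v&1\end{bmatrix}$.
   Context: Let $X_n=\{0,1,\ldots,n-1\}$. A naturally labeled (NL) poset on $X_n$ is a partial order $\preceq$ on $X_n$ such that $x\preceq y$ implies $x\le y$ in the usual integer order. Its poset matrix is the $n\times n$ $(0,1)$-matrix $A=(a_{i,j})_{i,j\in X_n}$ with $a_{i,j}=1$ if $j\preceq i$ and $0$ otherwise; $\mathcal{PM}(n)$ is the set of all such matrices. An order ideal is a downward closed subset. For a family $T$ of subsets of $X_n$ (closed under union and intersection, containing $\emptyset$ and $X_n$) and $S\in T$, $\mathrm{Grow}_S(T)$ is the family of subsets of $X_{n+1}$ obtained by doubling the interval $[S,X_n]$ of $T$, namely $\mathrm{Grow}_S(T)=T\cup\{U\cup\{n\}: U\in T,\ S\subseteq U\}$. *)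

(* Defs.v *)
From mathcomp Require Import all_boot all_algebra.
Set Implicit Arguments. Unset Strict Implicit. Unset Printing Implicit Defensive.

(* A (0,1)-matrix is represented as a boolean matrix 'M[bool]_n indexed by
   'I_n = X_n.  A i j = true  means  a_{i,j} = 1, i.e.  j ⪯ i. *)

Definition is_poset_matrix (n : nat) (A : 'M[bool]_n) : Prop :=
  [/\ (forall i, A i i),
      (forall i j, A i j -> A j i -> i = j),
      (forall i j k, A i j -> A j k -> A i k) &
      (forall i j : 'I_n, A i j -> (j <= i)%N)].

Definition is_order_ideal (n : nat) (A : 'M[bool]_n) (S : {set 'I_n}) : bool :=
  [forall i, forall j, (i \in S) && A i j ==> (j \in S)].

Definition ideals (n : nat) (A : 'M[bool]_n) : {set {set 'I_n}} :=
  [set S | is_order_ideal A S].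

Definition charvec (n : nat) (S : {set 'I_n}) : 'rV[bool]_n :=
  \row_j (j \in S).

Definition extmx (n : nat) (A : 'M[bool]_n) (v : 'rV[bool]_n) : 'M[bool]_(n + 1) :=
  block_mx A (const_mx false) v (const_mx true).

(* X_n is embedded in X_{n+1} = 'I_(n+1) via lshift; the new element n is
   rshift n ord0. *)
Definition embed (n : nat) (U : {set 'I_n}) : {set 'I_(n + 1)} :=
  [set lshift 1 i | i in U].

Definition newpt (n : nat) : 'I_(n + 1) := rshift n (@ord0 0).

Definition Grow (n : nat) (S : {set 'I_n}) (T : {set {set 'I_n}})
  : {set {set 'I_(n + 1)}} :=
  [set embed U | U in T] :|: [set newpt n |: embed U | U in [set U in T | S \subset U]].

(* Main.v *)
Require Import Defs.
From mathcomp Require Import all_boot all_algebra.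
Set Implicit Arguments. Unset Strict Implicit.

Section Aux.
Variable n : nat.
Variable A : 'M[bool]_n.
Variable v : 'rV[bool]_n.

Lemma ext_ll i j : extmx A v (lshift 1 i) (lshift 1 j) = A i j.
Proof. by rewrite /extmx block_mxEul. Qed.
Lemma ext_lr i : extmx A v (lshift 1 i) (newpt n) = false.
Proof. by rewrite /extmx /newpt block_mxEur mxE. Qed.
Lemma ext_rl j : extmx A v (newpt n) (lshift 1 j) = v ord0 j.
Proof. by rewrite /extmx /newpt block_mxEdl. Qed.
Lemma ext_rr : extmx A v (newpt n) (newpt n) = true.
Proof. by rewrite /extmx /newpt block_mxEdr mxE. Qed.
End Aux.

Lemma splitI n (P : 'I_(n+1) -> Prop) :
  (forall i, P (lshift 1 i)) -> P (newpt n) -> forall k, P k.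
Proof.
move=> Hl Hr k; case: (splitP k) => [i|j] Hk.
  by have -> : k = lshift 1 i by apply: val_inj.
have -> : k = newpt n; last by [].
apply: val_inj; rewrite /= Hk; by rewrite (ord1 j).
Qed.

Lemma mem_embed_l n (U : {set 'I_n}) i : (lshift 1 i \in embed U) = (i \in U).
Proof. by rewrite /embed (mem_imset _ _ (@lshift_inj n 1)). Qed.

Lemma mem_embed_r n (U : {set 'I_n}) : (newpt n \in embed U) = false.
Proof.
apply/negbTE/imsetP => -[i _] /(congr1 val) /= E.
by move: (ltn_ord i); rewrite -E addn0 ltnn.
Qed.

Lemma lshift_newpt n i : (lshift 1 i == newpt n) = false.
Proof.
apply/negbTE/eqP => /(congr1 val) /= E.
by move: (ltn_ord i); rewrite E addn0 ltnn.
Qed.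

Definition restr n (U : {set 'I_(n+1)}) : {set 'I_n} := [set i | lshift 1 i \in U].

Lemma ideal_ext n (A : 'M[bool]_n) (S : {set 'I_n}) (U : {set 'I_(n+1)}) :
  is_order_ideal (extmx A (charvec S)) U =
  is_order_ideal A (restr U) && ((newpt n \in U) ==> (S \subset restr U)).
Proof.
apply/idP/idP.
  move=> /forallP H; apply/andP; split.
    apply/forallP => i; apply/forallP => j; apply/implyP => /andP[].
    rewrite !inE => Hi Hij.
    by move: (forallP (H (lshift 1 i)) (lshift 1 j)); rewrite ext_ll Hi Hij.
  apply/implyP => Hn; apply/subsetP => j Hj; rewrite inE.
  by move: (forallP (H (newpt n)) (lshift 1 j)); rewrite ext_rl mxE Hn Hj.
move=> /andP[/forallP H1 H2]; apply/forallP.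
apply: splitI => [i|]; apply/forallP; apply: splitI => [j|] //.
- move: (forallP (H1 i) j); rewrite ext_ll !inE //.
- by rewrite ext_lr andbF.
- rewrite ext_rl mxE; apply/implyP => /andP[Hn Hj].
  by move: (subsetP (implyP H2 Hn) j Hj); rewrite inE.
- by rewrite andbC; apply/implyP => /andP[].
Qed.

Lemma restr_embed n (U : {set 'I_n}) : restr (embed U) = U.
Proof. by apply/setP => i; rewrite inE mem_embed_l. Qed.

Lemma restr_embedU n (U : {set 'I_n}) : restr (newpt n |: embed U) = U.
Proof. by apply/setP => i; rewrite !inE lshift_newpt mem_embed_l. Qed.

Lemma decomp n (U : {set 'I_(n+1)}) :
  U = if newpt n \in U then newpt n |: embed (restr U) else embed (restr U).
Proof.
apply/setP; apply: splitI => [i|].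
  case: ifP => _; rewrite ?inE ?lshift_newpt mem_embed_l inE //.
case: ifP => H; rewrite ?inE ?eqxx ?mem_embed_r //.
Qed.

Theorem theorem5p9 (n : nat) (A : 'M[bool]_n) (S : {set 'I_n}) :
  is_poset_matrix A ->
  S \in ideals A ->
  is_poset_matrix (extmx A (charvec S)) /\
  Grow S (ideals A) = ideals (extmx A (charvec S)).
Proof.
move=> [Hr Ha Ht Hnl] HS.
have HSi : is_order_ideal A S by move: HS; rewrite inE.
split.
  split.
  - apply: splitI => [i|]; by rewrite ?ext_ll ?ext_rr.
  - apply: splitI => [i|]; apply: splitI => [j|] //;
      rewrite ?ext_ll ?ext_lr ?ext_rl ?ext_rr //.
    by move=> H1 H2; rewrite (Ha _ _ H1 H2).
  - apply: splitI => [i|]; apply: splitI => [j|]; apply: splitI => [k|];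
      rewrite ?ext_ll ?ext_lr ?ext_rl ?ext_rr ?mxE //.
    + exact: Ht.
    + move=> Hj Hjk; move: (forallP (forallP HSi j) k); by rewrite Hj Hjk.
  - apply: splitI => [i|]; apply: splitI => [j|];
      rewrite ?ext_ll ?ext_lr ?ext_rl ?ext_rr //=.
    + exact: Hnl.
    + move=> _; rewrite addn0; exact: ltnW (ltn_ord j).
apply/setP => U; rewrite /Grow in_setU !inE ideal_ext.
apply/idP/idP.
  case/orP => /imsetP [V HV ->].
    by rewrite restr_embed mem_embed_r andbT; move: HV; rewrite ?inE.
  move: HV; rewrite ?inE => /andP[HV HSV].
  by rewrite restr_embedU HV ?inE eqxx HSV.
move=> /andP[H1 H2].
rewrite (decomp U); case: ifP => Hn.
  apply/orP; right; apply/imsetP; exists (restr U) => //.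
  by rewrite ?inE H1 (implyP H2 Hn).
apply/orP; left; apply/imsetP; exists (restr U) => //.
by rewrite ?inE.
Qed.
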